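(* Let $G$ be a balanced bipartite graph of order $2n$ with partite sets $X$ and $Y$, and let $M$ be a perfect matching of $G$. If $d_G(x) \ge \frac{n+3}{2}$ for every vertex $x \in X$, then $G$ has an $M$-cycle of length $6$.
   Context: Graphs are finite and simple. A cycle $C$ is an $M$-cycle if $|E(C)\cap M| = |C|/2$, i.e. it alternates between edges in $M$ and edges not in $M$. *)

(* Defs.v *)
From mathcomp Require Import all_boot.
Set Implicit Arguments. Unset Strict Implicit. Unset Printing Implicit Defensive.

Definition simple_graph (T : finType) (e : rel T) : Prop :=
  symmetric e /\ irreflexive e.

Definition deg (T : finType) (e : rel T) (x : T) : nat := #|[set y | e x y]|.

Definition bipartition (T : finType) (e : rel T) (X Y : {set T}) : Prop :=
  [/\ X :&: Y = set0, X :|: Y = setT &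
      forall u v, e u v -> (u \in X) && (v \in Y) || (u \in Y) && (v \in X)].

(* A perfect matching M of G, given as a symmetric relation m (m u v means
   the edge uv belongs to M): m is a subrelation of e and every vertex is
   incident with exactly one edge of M. *)
Definition perfect_matching (T : finType) (e m : rel T) : Prop :=
  [/\ symmetric m, subrel m e & forall x, #|[set y | m x y]| = 1].

(* A cycle of G, given by its cyclic sequence of distinct vertices
   c = [:: v_0; ...; v_{k-1}] with k >= 3 and edges v_i v_{i+1 mod k}. *)
Definition is_cycle (T : finType) (e : rel T) (c : seq T) : Prop :=
  [/\ 3 <= size c, uniq c & cycle e c].

Definition cycle_edges (T : finType) (c : seq T) : seq (T * T) :=
  zip c (rot 1 c).

Definition M_cycle (T : finType) (e m : rel T) (c : seq T) : Prop :=
  is_cycle e c /\ count (fun p => m p.1 p.2) (cycle_edges c) = size c %/ 2.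

(* Main.v *)
Require Import Defs.
From mathcomp Require Import all_boot.
From mathcomp Require Import zify.

Lemma bip_notY (T : finType) (e : rel T) X Y x :
  bipartition e X Y -> x \in X -> x \notin Y.
Proof.
case=> XY _ _ xX; apply/negP => xY.
have : x \in X :&: Y by rewrite inE xX xY.
by rewrite XY inE.
Qed.
Arguments bip_notY {T e X Y x}.


Lemma bip_notX (T : finType) (e : rel T) X Y x :
  bipartition e X Y -> x \in Y -> x \notin X.
Proof.
move=> B xY; apply/negP => xX; by move: (bip_notY B xX); rewrite xY.
Qed.
Arguments bip_notX {T e X Y x}.


Lemma nbrXY (T : finType) (e : rel T) X Y x y :
  bipartition e X Y -> x \in X -> e x y -> y \in Y.
Proof.
move=> B xX exy; have nY := bip_notY B xX.
case: B => _ _ H; move: (H _ _ exy); rewrite xX (negbTE nY) /=.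
by rewrite orbF.
Qed.
Arguments nbrXY {T e X Y x y}.


Lemma nbrYX (T : finType) (e : rel T) X Y x y :
  bipartition e X Y -> x \in Y -> e x y -> y \in X.
Proof.
move=> B xY exy; have nX := bip_notX B xY.
case: B => _ _ H; move: (H _ _ exy); rewrite xY (negbTE nX) /=.
by [].
Qed.
Arguments nbrYX {T e X Y x y}.


Lemma deg_sum (T : finType) (e : rel T) (B : {set T}) x :
  (forall y, e x y -> y \in B) -> deg e x = \sum_(y in B) (e x y : nat).
Proof.
move=> HB; rewrite /deg -sum1_card big_mkcond /= [RHS]big_mkcond /=.
apply: eq_bigr => y _; rewrite inE.
by case E: (e x y); [rewrite HB | case: (y \in B)].
Qed.
Arguments deg_sum {T e B x}.


Lemma sum_deg (T : finType) (e : rel T) X Y :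
  symmetric e -> bipartition e X Y ->
  \sum_(x in X) deg e x = \sum_(y in Y) deg e y.
Proof.
move=> sym B.
transitivity (\sum_(x in X) \sum_(y in Y) (e x y : nat)).
  apply: eq_bigr => x xX; apply: deg_sum => y; exact: nbrXY B xX.
rewrite exchange_big /=; apply: eq_bigr => y yY.
rewrite (deg_sum (B := X)); last by move=> x; exact: nbrYX B yY.
by apply: eq_bigr => x _; rewrite sym.
Qed.
Arguments sum_deg {T e X Y}.


Theorem lemma2 (T : finType) (e m : rel T) (X Y : {set T}) (n : nat) :
  simple_graph e ->
  bipartition e X Y ->
  0 < n -> #|X| = n -> #|Y| = n ->
  perfect_matching e m ->
  (forall x, x \in X -> n + 3 <= 2 * deg e x) ->
  exists c : seq T, size c = 6 /\ M_cycle e m c.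
Proof.
move=> [esym eirr] B n0 cX cY [msym msub mcard] Hdeg.
pose p x := odflt x [pick y | m x y].
have pP : forall x, m x (p x).
  move=> x; rewrite /p; case: pickP => [y //|H].
  have : 0 < #|[set y | m x y]| by rewrite mcard.
  by case/card_gt0P => y; rewrite inE H.
have puniq : forall x y, m x y -> y = p x.
  move=> x y mxy; have := mcard x; move/eqP/cards1P => [a Ha].
  have : y \in [set y | m x y] by rewrite inE.
  have : p x \in [set y | m x y] by rewrite inE.
  by rewrite Ha !inE => /eqP -> /eqP ->.
have ppK : forall x, p (p x) = x.
  by move=> x; symmetry; apply: puniq; rewrite msym.
have pinj : injective p by exact: can_inj ppK.
have neqXY : forall a b, a \in X -> b \in Y -> (a == b) = false /\ (b == a) = false.
  move=> a b aX bY; have nY := bip_notY B aX.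
  have ab : a != b by apply/eqP => E; rewrite E bY in nY.
  by rewrite (negbTE ab) eq_sym (negbTE ab).
have [y0 y0Y Hy0] : exists2 y, y \in Y & n + 3 <= 2 * deg e y.
  case: (boolP [exists y in Y, n + 3 <= 2 * deg e y]) => [/exists_inP//|/exists_inPn H].
  exfalso.
  have h1 : n * (n + 3) <= \sum_(x in X) 2 * deg e x.
    have -> : n * (n + 3) = #|X| * (n + 3) by rewrite cX.
    by rewrite -sum_nat_const; apply: leq_sum.
  have h2 : \sum_(y in Y) 2 * deg e y <= n * (n + 2).
    have -> : n * (n + 2) = #|Y| * (n + 2) by rewrite cY.
    rewrite -sum_nat_const; apply: leq_sum => y yY.
    by move: (H y yY); rewrite -ltnNge addn3 ltnS addn2.
  rewrite -!big_distrr /= (sum_deg esym B) in h1 h2.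
  nia.
set z := p y0.
have ezy0 : m y0 z by exact: pP.
have zX : z \in X by apply: nbrYX B y0Y _; exact: msub.
have [y1 y1in] : exists y1, y1 \in [set y | e z y] :\ y0.
  apply/card_gt0P.
  have := Hdeg z zX; have := cardsD1 y0 [set y | e z y].
  rewrite /deg inE esym (msub _ _ ezy0) /=. lia.
move: y1in; rewrite !inE => /andP [y1y0 ezy1].
have y1Y : y1 \in Y by exact: nbrXY B zX ezy1.
set x2 := p y1.
have my1x2 : m y1 x2 by exact: pP.
have x2X : x2 \in X by apply: nbrYX B y1Y _; exact: msub.
pose S1 := [set y | e x2 y] :\ y1.
pose S2 := p @: ([set x | e y0 x] :\ z).
have cS1 : #|S1| + 1 = deg e x2.
  have := cardsD1 y1 [set y | e x2 y].
  rewrite /deg inE esym (msub _ _ my1x2) /S1. lia.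
have cS2 : #|S2| + 1 = deg e y0.
  rewrite /S2 card_imset //.
  have := cardsD1 z [set y | e y0 y].
  rewrite /deg inE (msub _ _ ezy0). lia.
have sU : S1 :|: S2 \subset Y.
  apply/subsetP => y; rewrite inE => /orP [|].
    by rewrite !inE => /andP [_ ]; exact: nbrXY B x2X.
  case/imsetP => w; rewrite !inE => /andP [_ ey0w] ->.
  have wX : w \in X by exact: nbrYX B y0Y ey0w.
  apply: nbrXY B wX _; exact: msub (pP w).
have [y2 y2in] : exists y2, y2 \in S1 :&: S2.
  apply/card_gt0P.
  have := subset_leq_card sU; have := cardsUI S1 S2.
  have := Hdeg x2 x2X. rewrite cY. lia.
move: y2in; rewrite inE => /andP [].
rewrite !inE => /andP [y2y1 ex2y2] /imsetP [w]; rewrite !inE => /andP [wz ey0w] y2E.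
have wX : w \in X by exact: nbrYX B y0Y ey0w.
have y2Y : y2 \in Y by exact: nbrXY B x2X ex2y2.
have my2w : m y2 w by rewrite y2E msym; exact: pP.
have pzE : p z = y0 by rewrite /z ppK.
have n1 : m z y1 = false.
  apply/negbTE/negP => H; have := puniq _ _ H; rewrite pzE => E; by rewrite E eqxx in y1y0.
have n2 : m x2 y2 = false.
  apply/negbTE/negP => H; have := puniq _ _ H; rewrite /x2 ppK => E; by rewrite E eqxx in y2y1.
have n3 : m w y0 = false.
  apply/negbTE/negP => H; have := puniq _ _ H; rewrite -y2E => E.
  have : p y0 = p y2 by rewrite E.
  rewrite -/z y2E ppK => E'. by rewrite E' eqxx in wz.
have m1 : m y1 x2 by [].
have m2 : m y2 w by [].
have m3 : m y0 z by [].
have d1 : (z == x2) = false.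
  apply/negbTE/negP => /eqP E; have : y0 = y1 by apply: pinj.
  by move=> E'; rewrite E' eqxx in y1y0.
have d2 : (z == w) = false by rewrite eq_sym; apply/negbTE.
have d3 : (x2 == w) = false.
  apply/negbTE/negP => /eqP E; have : p x2 = p w by rewrite E.
  rewrite /x2 ppK -y2E => E'; by rewrite E' eqxx in y2y1.
have d4 : (y1 == y2) = false by rewrite eq_sym; apply/negbTE.
have d5 : (y1 == y0) = false by apply/negbTE.
have d6 : (y2 == y0) = false.
  apply/negbTE/negP => /eqP E; have : p y2 = p y0 by rewrite E.
  rewrite y2E ppK -/z => E'; by rewrite E' eqxx in wz.
case: (neqXY _ _ zX y1Y) => a1 _.
case: (neqXY _ _ zX y2Y) => a2 _.
case: (neqXY _ _ zX y0Y) => a3 _.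
case: (neqXY _ _ x2X y1Y) => _ a4.
case: (neqXY _ _ wX y1Y) => _ a5.
case: (neqXY _ _ x2X y2Y) => a6 _.
case: (neqXY _ _ x2X y0Y) => a7 _.
case: (neqXY _ _ wX y2Y) => _ a8.
case: (neqXY _ _ wX y0Y) => a9 _.
exists [:: z; y1; x2; y2; w; y0]; split => //.
split; last first.
  by rewrite /cycle_edges /= n1 n2 n3 m1 m2 m3.
split => //.
  by rewrite /= !inE a1 a2 a3 a4 a5 a6 a7 a8 a9 d1 d2 d3 d4 d5 d6.
rewrite /= ezy1 ex2y2 (msub _ _ m1) (msub _ _ m2) (msub _ _ m3).
by rewrite esym ey0w.
Qed.
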